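(* Consider logistic regression with binary responses $y_i\in\{0,1\}$, $i=1,\dots,n$, design matrix $X\in\mathbb{R}^{n\times(p+1)}$ whose first column is the intercept column, whose next $m$ columns are mandatory predictors and whose remaining columns form $X_u\in\mathbb{R}^{n\times(p-m)}$, and log-likelihood $\ell(\beta_0,\boldsymbol{\beta})=\sum_{i=1}^n\bigl(y_i\eta_i-\log(1+e^{\eta_i})\bigr)$ with $\eta_i=\beta_0+\mathbf{x}_i^\top\boldsymbol{\beta}$. Fix $\lambda\ge0$, let $\nu_{\max}$ be the largest eigenvalue of $X_u^\top X_u$, and let $\delta\ge\nu_{\max}/(8n)$, $\delta>0$. For $\mathbf{t}\in[0,1]^{p-m}$ let $T_{\mathbf{t}}=\mathrm{diag}(1,\dots,1,t_1,\dots,t_{p-m})$ (with $m$ leading ones), $\Gamma_{\mathbf{t}}=\sqrt{I-T_{\mathbf{t}}^2}$, and $$f_{\delta,\lambda}(\mathbf{t})=\inf_{\beta_0,\boldsymbol{\beta}}\Bigl[-\tfrac1n\ell(\beta_0,T_{\mathbf{t}}\boldsymbol{\beta})+\lambda\|\boldsymbol{\beta}\|_2^2+\delta\|\Gamma_{\mathbf{t}}\boldsymbol{\beta}\|_2^2\Bigr].$$ Then $f_{\delta,\lambda}$ is concave on $(0,1)^{p-m}$ (extending concavely to $\mathcal{T}_k=\{\mathbf{t}\in[0,1]^{p-m}:\mathbf{1}^\top\mathbf{t}=k\}$), and a minimizer of $f_{\delta,\lambda}$ over $\mathcal{T}_k$ can be chosen in $\mathcal{S}_k=\{\mathbf{s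}\in\{0,1\}^{p-m}:\mathbf{1}^\top\mathbf{s}=k\}$.
   Context: Here $\mathbf{x}_i^\top$ is the $i$th row of $X$ without the intercept entry. The quantity $\nu_{\max}/(8n)$ is the paper's explicit concavity threshold for logistic regression. *)

(* Defs.v *)
From HB Require Import structures.
From mathcomp Require Import all_boot all_order all_algebra.
From mathcomp Require Import all_classical all_reals all_analysis.
Set Implicit Arguments. Unset Strict Implicit. Unset Printing Implicit Defensive.
Import Order.TTheory GRing.Theory Num.Theory.
Local Open Scope classical_set_scope.
Local Open Scope ring_scope.

Section LogReg.
Variable R : realType.

Definition Tmx (m q : nat) (t : 'rV[R]_q) : 'M[R]_(m + q) :=
  diag_mx (row_mx (const_mx 1) t).

Definition Gmx (m q : nat) (t : 'rV[R]_q) : 'M[R]_(m + q) :=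
  diag_mx (\row_j Num.sqrt (1 - (row_mx (const_mx 1) t : 'rV[R]_(m + q)) 0 j ^+ 2)).

Definition sqnorm (d : nat) (v : 'cV[R]_d) : R := \sum_i (v i 0) ^+ 2.

(* logistic log-likelihood; X holds the rows x_i^T (without intercept) *)
Definition loglik (n d : nat) (X : 'M[R]_(n, d)) (y : 'I_n -> R)
  (b0 : R) (b : 'cV[R]_d) : R :=
  \sum_i (y i * (b0 + (X *m b) i 0) - ln (1 + expR (b0 + (X *m b) i 0))).

Definition f_obj (n m q : nat) (X : 'M[R]_(n, m + q)) (y : 'I_n -> R)
  (del lam : R) (t : 'rV[R]_q) : R :=
  inf (range (fun bb : R * 'cV[R]_(m + q) =>
     - (n%:R)^-1 * loglik X y bb.1 (Tmx m t *m bb.2)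
     + lam * sqnorm bb.2 + del * sqnorm (Gmx m t *m bb.2))).

Definition concave_on (q : nat) (A : set 'rV[R]_q) (f : 'rV[R]_q -> R) : Prop :=
  forall x y, A x -> A y -> forall th : R, 0 <= th <= 1 ->
    th * f x + (1 - th) * f y <= f (th *: x + (1 - th) *: y).

Definition open_cube (q : nat) : set 'rV[R]_q :=
  [set t | forall j, 0 < t 0 j < 1].

Definition Tk (q k : nat) : set 'rV[R]_q :=
  [set t | (forall j, 0 <= t 0 j <= 1) /\ \sum_j t 0 j = k%:R].

Definition Sk (q k : nat) : set 'rV[R]_q :=
  [set s | (forall j, s 0 j = 0 \/ s 0 j = 1) /\ \sum_j s 0 j = k%:R].

End LogReg.

(* Main.v *)
Require Import Defs.
From HB Require Import structures.
From mathcomp Require Import all_boot all_order all_algebra.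
From mathcomp Require Import all_classical all_reals all_analysis.
From mathcomp Require Import ring lra.
From mathcomp Require unstable.
Import Order.TTheory GRing.Theory Num.Theory.
Local Open Scope classical_set_scope.
Local Open Scope ring_scope.

Module LR.
Import numFieldNormedType.Exports.


Section Psi.
Variable R : realType.
Implicit Types x a b : R.

Definition sig x : R := expR x / (1 + expR x).

Lemma onepe_gt0 x : 0 < 1 + expR x.
Proof. by rewrite addr_gt0 // expR_gt0. Qed.

Lemma is_derive_psi x : is_derive x 1 (fun z : R => ln (1 + expR z)) (sig x).
Proof.
have h1 : is_derive x 1 (fun z : R => 1 + expR z) (expR x).
  have H := is_deriveD (is_derive_cst (1:R) x 1) (is_derive_expR x).
  rewrite add0r in H; exact: H.
have h2 := is_derive1_ln (onepe_gt0 x).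
have := @is_derive1_comp R (@ln R) (fun z => 1 + expR z) x _ _ h2 h1.
move=> H; rewrite (_ : sig x = (1 + expR x)^-1 * expR x); last by rewrite /sig mulrC.
exact: H.
Qed.

Lemma is_derive_sig x : is_derive x 1 sig (expR x / (1 + expR x) ^+ 2).
Proof.
have e : sig = fun z => 1 - (1 + expR z)^-1.
  apply/funext => z; rewrite /sig; have := onepe_gt0 z => h.
  by field; rewrite gt_eqF.
rewrite e.
have h1 : is_derive x 1 (fun z : R => 1 + expR z) (expR x).
  have H := is_deriveD (is_derive_cst (1:R) x 1) (is_derive_expR x).
  rewrite add0r in H; exact: H.
apply: DeriveDef.
  apply: derivableB; first exact: derivable_cst.
  apply: derivableV; first by rewrite gt_eqF // onepe_gt0.
  exact: ex_derive.
rewrite deriveB; last first.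
- apply: derivableV; first by rewrite gt_eqF // onepe_gt0.
  exact: ex_derive.
- exact: derivable_cst.
rewrite deriveV; last exact: ex_derive.
  2: by rewrite gt_eqF // onepe_gt0.
have -> : 'D_1 (fun y : R => 1 + expR y) x = expR x by apply: derive_val.
rewrite (_ : 'D_1 (cst (1:R)) x = 0); last by apply: derive_val.
have := onepe_gt0 x => h.
rewrite /GRing.scale /=.
by field; rewrite gt_eqF.
Qed.
End Psi.

Set Implicit Arguments. Unset Strict Implicit. Unset Printing Implicit Defensive.

Section Psi2.
Variable R : realType.
Implicit Types x a b : R.

Definition hh (x : R) : R := x ^+ 2 / 8 - ln (1 + expR x).
Definition dh (x : R) : R := x / 4 - @sig R x.

Lemma is_derive_hh x : is_derive x 1 hh (dh x).
Proof.
have H1 : is_derive x 1 (fun z : R => z ^+ 2 / 8) (x / 4).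
  have H := is_deriveM (is_deriveX 2 (is_derive_id x 1)) (is_derive_cst (8^-1 : R) x 1).
  have -> : (fun z : R => z ^+ 2 / 8) = (id ^+ 2 * cst (8^-1 : R)) by apply/funext.
  set d := (X in is_derive _ _ _ X) in H.
  have -> : x / 4 = d by rewrite /d /GRing.scale /=; field.
  exact: H.
have H := is_deriveB H1 (@is_derive_psi R x).
have -> : hh = (fun z : R => z ^+ 2 / 8) - (fun z => ln (1 + expR z)) by apply/funext.
exact: H.
Qed.

Lemma D_hh : 'D_1 hh = dh.
Proof. by apply/funext => x; exact: (@derive_val _ _ _ _ _ _ _ (is_derive_hh x)). Qed.

Lemma is_derive_dh x : is_derive x 1 dh (4^-1 - expR x / (1 + expR x) ^+ 2).
Proof.
have H1 : is_derive x 1 (fun z : R => z / 4) (4^-1).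
  have H := is_deriveM (is_derive_id x 1) (is_derive_cst (4^-1 : R) x 1).
  have -> : (fun z : R => z / 4) = (id * cst (4^-1 : R)) by apply/funext.
  set d := (X in is_derive _ _ _ X) in H.
  have E : d = 4^-1 by rewrite /d /GRing.scale /=; field.
  by rewrite E in H.
have H := is_deriveB H1 (@is_derive_sig R x).
have -> : dh = (fun z : R => z / 4) - @sig R by apply/funext.
exact: H.
Qed.

Lemma DD_hh_ge0 x : 0 <= 'D_1 ('D_1 hh) x.
Proof.
rewrite D_hh (@derive_val _ _ _ _ _ _ _ (is_derive_dh x)).
have e0 := expR_gt0 x.
rewrite subr_ge0 ler_pdivrMr; last by rewrite exprn_gt0 // (@onepe_gt0 R).
set e := expR x.
have E : 4^-1 * (1 + e) ^+ 2 - e = 4^-1 * (1 - e) ^+ 2 by field.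
by rewrite -subr_ge0 E mulr_ge0 // ?sqr_ge0 // invr_ge0.
Qed.

Lemma hh_cont (x : R) : {for x, continuous (hh : R -> R)}.
Proof.
apply: differentiable_continuous; apply/derivable1_diffP.
exact: (@ex_derive _ _ _ _ _ _ _ (is_derive_hh x)).
Qed.

Local Open Scope convex_scope.
Lemma hh_convex_le (t : {i01 R}) (a b : R^o) : a <= b ->
  hh (a <| t |> b) <= (hh a : R^o) <| t |> (hh b : R^o).
Proof.
move=> ab.
have H1 : forall x, a < x < b -> 0 <= 'D_1 ('D_1 hh) x by move=> x _; exact: DD_hh_ge0.
have H2 : hh x @[x --> b^'-] --> hh b by exact/cvg_at_left_filter/hh_cont.
have H3 : hh x @[x --> a^'+] --> hh a by exact/cvg_at_right_filter/hh_cont.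
have H4 : {in `]a, b[, forall x, derivable hh x 1}.
  by move=> z _; exact: (@ex_derive _ _ _ _ _ _ _ (is_derive_hh z)).
have H5 : {in `]a, b[, forall x, derivable ('D_1 hh) x 1}.
  by move=> z _; rewrite D_hh; exact: (@ex_derive _ _ _ _ _ _ _ (is_derive_dh z)).
exact: (@second_derivative_convex R hh a b H1 H2 H3 H4 H5 t ab).
Qed.
Local Close Scope convex_scope.

Lemma psi_gap (th a b : R) : 0 <= th <= 1 ->
  th * ln (1 + expR a) + (1 - th) * ln (1 + expR b)
  - ln (1 + expR (th * a + (1 - th) * b))
  <= th * (1 - th) * (a - b) ^+ 2 / 8.
Proof.
move=> /andP[t0 t1].
have H : hh (th * a + (1 - th) * b) <= th * hh a + (1 - th) * hh b.
  have [ab|ba] := leP a b.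
    by have := @hh_convex_le (Itv01 t0 t1) a b ab; rewrite !convRE /unstable.onem.
  have t0' : 0 <= 1 - th by rewrite subr_ge0.
  have t1' : 1 - th <= 1 by rewrite lerBlDr lerDl.
  have := @hh_convex_le (Itv01 t0' t1') b a (ltW ba); rewrite !convRE /unstable.onem /=.
  have -> : 1 - (1 - th) = th by rewrite opprB addrC subrK.
  by rewrite addrC [X in _ <= X]addrC.
have E : th * (1 - th) * (a - b) ^+ 2 / 8 -
   (th * ln (1 + expR a) + (1 - th) * ln (1 + expR b)
    - ln (1 + expR (th * a + (1 - th) * b)))
   = th * hh a + (1 - th) * hh b - hh (th * a + (1 - th) * b).
  by rewrite /hh; ring.
by rewrite -subr_ge0 E subr_ge0.
Qed.
End Psi2.

Section Spec.
Variable R : realType.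
Variable q : nat.

Lemma cont_sum (I : finType) (F : I -> 'rV[R]_q -> R) :
  (forall i, continuous (F i)) -> continuous (fun u => \sum_i F i u).
Proof.
move=> H.
suff : forall r : seq I, continuous (fun u => \sum_(i <- r) F i u) by apply.
elim=> [|i r IH].
  have -> : (fun u : 'rV[R]_q => \sum_(i <- [::]) F i u) = cst 0.
    by apply/funext => u; rewrite big_nil.
  exact: cst_continuous.
have -> : (fun u : 'rV[R]_q => \sum_(j <- i :: r) F j u) =
   (F i) + (fun u => \sum_(j <- r) F j u).
  by apply/funext => u; rewrite big_cons.
by move=> u; apply: continuousD; [exact: H | exact: IH].
Qed.

Lemma cont_lin (m : nat) (B : 'M[R]_(q, m)) i :
  continuous (fun u : 'rV[R]_q => (u *m B) 0 i).
Proof.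
have -> : (fun u : 'rV[R]_q => (u *m B) 0 i) =
   (fun u => \sum_j (u 0 j * B j i)).
  by apply/funext => u; rewrite mxE.
apply: cont_sum => j u.
have -> : (fun u : 'rV[R]_q => u 0 j * B j i) =
    (fun u : 'rV[R]_q => u 0 j) \* cst (B j i) by [].
apply: continuousM; first exact: coord_continuous.
exact: cst_continuous.
Qed.


Definition nr (m : nat) (u : 'rV[R]_m) : R := (u *m u^T) 0 0.

Lemma nrE (m : nat) (u : 'rV[R]_m) : nr u = \sum_j u 0 j ^+ 2.
Proof. by rewrite /nr mxE; apply: eq_bigr => j _; rewrite mxE expr2. Qed.

Lemma nr_ge0 (m : nat) (u : 'rV[R]_m) : 0 <= nr u.
Proof. by rewrite nrE sumr_ge0 // => j _; rewrite sqr_ge0. Qed.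

Lemma nr_eq0 (m : nat) (u : 'rV[R]_m) : nr u = 0 -> u = 0.
Proof.
rewrite nrE => /psumr_eq0P H; apply/rowP => j; rewrite mxE.
by apply/eqP; rewrite -sqrf_eq0; apply/eqP; apply: H => // k _; rewrite sqr_ge0.
Qed.

Lemma nrZ (m : nat) (c : R) (u : 'rV[R]_m) : nr (c *: u) = c ^+ 2 * nr u.
Proof. by rewrite /nr linearZ /= -scalemxAl -scalemxAr !mxE mulrA expr2. Qed.

Lemma cont_nr (m : nat) (B : 'M[R]_(q, m)) :
  continuous (fun u : 'rV[R]_q => nr (u *m B)).
Proof.
have -> : (fun u : 'rV[R]_q => nr (u *m B)) =
   (fun u => \sum_j ((u *m B) 0 j * (u *m B) 0 j)).
  by apply/funext => u; rewrite nrE; apply: eq_bigr => j _; rewrite expr2.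
apply: cont_sum => j u.
apply: (@continuousM _ _ (fun u : 'rV[R]_q => (u *m B) 0 j) (fun u : 'rV[R]_q => (u *m B) 0 j));
  exact: cont_lin.
Qed.

Lemma nr_coord (u : 'rV[R]_q) j : u 0 j ^+ 2 <= nr u.
Proof.
rewrite nrE (bigD1 j) //= lerDl sumr_ge0 // => k _; exact: sqr_ge0.
Qed.

Lemma cont_nr1 : continuous (fun u : 'rV[R]_q => nr u).
Proof.
have -> : (fun u : 'rV[R]_q => nr u) = (fun u => nr (u *m 1%:M)).
  by apply/funext => u; rewrite mulmx1.
exact: cont_nr.
Qed.

Lemma sphere_compact : compact [set u : 'rV[R]_q | nr u = 1].
Proof.
apply: bounded_closed_compact.
  exists 1; split; first by rewrite num_real.
  move=> M M1 u /= Su.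
  rewrite [leLHS]/Num.norm /= mx_normrE.
  apply: bigmax_le; first by lra.
  move=> [i j] _ /=; rewrite (ord1 i).
  have := nr_coord u j; rewrite Su => h.
  have : `|u 0 j| ^+ 2 <= 1 by rewrite real_normK // num_real.
  have := normr_ge0 (u 0 j); nra.
apply: (@preimage_closed _ _ (fun u : 'rV[R]_q => nr u) [set x | x = 1]).
  by move=> u _; exact: cont_nr1.
exact: closed_eq.
Qed.

Lemma mx11_tr (X : 'M[R]_1) : X 0 0 = X^T 0 0.
Proof. by rewrite mxE. Qed.

Lemma bil_expand (K : 'M[R]_q) (u z : 'rV[R]_q) (e : R) :
  ((u + e *: z) *m K *m (u + e *: z)^T) 0 0 =
  (u *m K *m u^T) 0 0 + e * ((u *m K *m z^T) 0 0 + (z *m K *m u^T) 0 0)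
  + e ^+ 2 * (z *m K *m z^T) 0 0.
Proof.
rewrite linearD linearZ /= !mulmxDl !mulmxDr -!scalemxAl -!scalemxAr.
set a := u *m K *m u^T; set b := u *m K *m z^T; set c := z *m K *m u^T.
set d := z *m K *m z^T.
rewrite !mxE; ring.
Qed.

Lemma bil_sym (K : 'M[R]_q) (u z : 'rV[R]_q) : K^T = K ->
  (z *m K *m u^T) 0 0 = (u *m K *m z^T) 0 0.
Proof.
move=> Ks; rewrite mx11_tr !trmx_mul trmxK Ks mulmxA; done.
Qed.

Lemma quad_bound_row (n : nat) (A : 'M[R]_(n, q)) (mu : R) :
  (forall nu, eigenvalue (A^T *m A) nu -> nu <= mu) ->
  forall w : 'rV[R]_q, nr (w *m A^T) <= mu * nr w.
Proof.
move=> Hev w.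
have [->|w0] := eqVneq w 0.
  by rewrite mul0mx /nr !mul0mx mxE mulr0.
set S := [set u : 'rV[R]_q | nr u = 1].
have nrw : 0 < nr w.
  rewrite lt_neqAle nr_ge0 andbT; apply/eqP => /esym /nr_eq0 h.
  by rewrite h eqxx in w0.
have S0 : S !=set0.
  exists ((Num.sqrt (nr w))^-1 *: w); rewrite /S /= nrZ exprVn sqr_sqrtr ?nr_ge0 //.
  by rewrite mulVf // gt_eqF.
have cS : compact S by exact: sphere_compact.
have [u uS umax] := @EVT_max_rV R q (fun u => nr (u *m A^T)) S S0 cS
   (continuous_subspaceT (@cont_nr _ A^T)).
move: uS; rewrite inE /S /= => uS.
set C := nr (u *m A^T).
have Hall : forall w : 'rV[R]_q, nr (w *m A^T) <= C * nr w.
  move=> v; have [->|v0] := eqVneq v 0.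
    by rewrite mul0mx /nr !mul0mx mxE mulr0.
  have nrv : 0 < nr v.
    rewrite lt_neqAle nr_ge0 andbT; apply/eqP => /esym /nr_eq0 h.
    by rewrite h eqxx in v0.
  set c := (Num.sqrt (nr v))^-1.
  have c2 : c ^+ 2 = (nr v)^-1 by rewrite /c exprVn sqr_sqrtr ?nr_ge0.
  have := umax (c *: v); rewrite inE /S /= nrZ c2 mulVf ?gt_eqF // => /(_ erefl).
  rewrite -scalemxAl nrZ c2 -/C.
  by rewrite ler_pdivrMl // mulrC.
set M := A^T *m A.
have QE : forall v, nr (v *m A^T) = (v *m M *m v^T) 0 0.
  by move=> v; rewrite /nr /M trmx_mul trmxK !mulmxA.
have NE : forall v : 'rV[R]_q, nr v = (v *m 1%:M *m v^T) 0 0.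
  by move=> v; rewrite mulmx1.
have Msym : M^T = M by rewrite /M trmx_mul trmxK.
set z := C *: u - u *m M.
have key : forall e : R,
   0 <= 2 * e * nr z + e ^+ 2 * (C * nr z - nr (z *m A^T)).
  move=> e; have := Hall (u + e *: z).
  rewrite QE NE !bil_expand (bil_sym _ _ Msym) (bil_sym _ _ (trmx1 _ _)).
  rewrite -QE -!NE uS -/C.
  have zT : z^T = C *: u^T - M *m u^T.
    by rewrite /z linearB /= linearZ /= trmx_mul Msym.
  have E1 : C * (z *m 1%:M *m u^T) 0 0 - (z *m M *m u^T) 0 0 = nr z.
    rewrite /nr zT mulmxBr -scalemxAr mulmx1 [z *m (M *m u^T)]mulmxA.
    set p := z *m u^T; set r := z *m M *m u^T.
    by rewrite !mxE.
  have E2 : (z *m M *m z^T) 0 0 = nr (z *m A^T) by rewrite QE.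
  rewrite E2 => h.
  have E3 : (z *m M *m u^T) 0 0 = C * (z *m 1%:M *m u^T) 0 0 - nr z by rewrite -E1; ring.
  rewrite E3 in h.
  nra.
have hb : 0 <= C * nr z - nr (z *m A^T) by rewrite subr_ge0 Hall.
have za : nr z = 0.
  set a := nr z in key hb *; set b := C * nr z - nr (z *m A^T) in key hb *.
  have hb1 : 0 < b + 1 by lra.
  have h := key (- (a / (b + 1))).
  have E : 2 * - (a / (b + 1)) * a + (- (a / (b + 1))) ^+ 2 * b =
           - (a ^+ 2 * (b + 2)) / (b + 1) ^+ 2.
    by field; rewrite gt_eqF.
  rewrite E in h.
  have h2 : a ^+ 2 * (b + 2) <= 0.
    have := mulr_ge0 h (sqr_ge0 (b + 1)).
    by rewrite divfK ?expf_neq0 ?gt_eqF // oppr_ge0.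
  have a0 : 0 <= a by exact: nr_ge0.
  nra.
have z0 := nr_eq0 za.
have eu : u *m M = C *: u by apply/esym/subr0_eq.
have u0 : u != 0.
  apply/eqP => u0; move: uS; rewrite u0 /nr mul0mx mxE => h01.
  by move: (@oner_neq0 R); rewrite h01 eqxx.
have Cmu : C <= mu by apply: Hev; apply/eigenvalueP; exists u.
apply: (le_trans (Hall w)); apply: ler_wpM2r => //; exact: nr_ge0.
Qed.

End Spec.

Section Conc.
Variable R : realType.

Definition cube01 (q : nat) (t : 'rV[R]_q) := forall j, 0 <= t 0 j <= 1.

Definition rr (m q : nat) (t : 'rV[R]_q) : 'rV[R]_(m + q) := row_mx (const_mx 1) t.

Lemma rr_case (m q : nat) (t : 'rV[R]_q) (j : 'I_(m + q)) :
  (rr m t 0 j = 1 /\ forall t' : 'rV[R]_q, rr m t' 0 j = 1)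
  \/ exists k, j = rshift m k /\ forall t' : 'rV[R]_q, rr m t' 0 j = t' 0 k.
Proof.
have -> : j = unsplit (fintype.split j) by rewrite splitK.
case: (fintype.split j) => k /=.
  by left; rewrite /rr row_mxEl mxE; split=> // t'; rewrite row_mxEl mxE.
by right; exists k; split=> // t'; rewrite /rr row_mxEr.
Qed.

Lemma rr_lin (m q : nat) (t1 t2 : 'rV[R]_q) th j :
  rr m (th *: t1 + (1 - th) *: t2) 0 j = th * rr m t1 0 j + (1 - th) * rr m t2 0 j.
Proof.
case: (rr_case t1 j) => [[_ h]|[k [_ h]]]; rewrite !h; last by rewrite !mxE.
ring.
Qed.

Lemma rr_01 (m q : nat) (t : 'rV[R]_q) j : cube01 t -> 0 <= rr m t 0 j <= 1.
Proof.
move=> ht; case: (rr_case t j) => [[h _]|[k [_ h]]]; rewrite h //.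
by rewrite ler01 lexx.
Qed.

Lemma Tmx_mulE (m q : nat) (t : 'rV[R]_q) (b : 'cV[R]_(m + q)) j :
  (Tmx m t *m b) j 0 = rr m t 0 j * b j 0.
Proof. by rewrite /Tmx mul_diag_mx mxE. Qed.

Lemma Gmx_sq (m q : nat) (t : 'rV[R]_q) (b : 'cV[R]_(m + q)) : cube01 t ->
  sqnorm (Gmx m t *m b) = \sum_j (1 - rr m t 0 j ^+ 2) * b j 0 ^+ 2.
Proof.
move=> ht; rewrite /sqnorm; apply: eq_bigr => j _.
have E : (Gmx m t *m b) j 0 = Num.sqrt (1 - rr m t 0 j ^+ 2) * b j 0.
  by rewrite /Gmx /rr mul_diag_mx !mxE.
rewrite E exprMn sqr_sqrtr //.
have := @rr_01 m q t j ht => /andP[h0 h1].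
by rewrite subr_ge0 expr_le1.
Qed.

Lemma sum_comb (I : finType) (a1 a2 az : I -> R) th :
  \sum_i az i = th * \sum_i a1 i + (1 - th) * \sum_i a2 i
     + \sum_i (az i - th * a1 i - (1 - th) * a2 i).
Proof.
rewrite !mulr_sumr -!big_split /=; apply: eq_bigr => i _; ring.
Qed.

Lemma arith (th ni lam del A1 A2 GA B1 B2 GB S : R) : ni * GA <= del * GB ->
  th * (- ni * A1 + lam * S + del * B1) + (1 - th) * (- ni * A2 + lam * S + del * B2)
  <= - ni * (th * A1 + (1 - th) * A2 + GA) + lam * S + del * (th * B1 + (1 - th) * B2 + GB).
Proof.
move=> h; rewrite -subr_ge0.
set L := (X in X - _). set K := (X in _ - X).
have -> : L - K = del * GB - ni * GA by rewrite /L /K; ring.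
by rewrite subr_ge0.
Qed.

Lemma sqnorm_col (d : nat) (v : 'cV[R]_d) : sqnorm v = nr v^T.
Proof. by rewrite nrE /sqnorm; apply: eq_bigr => j _; rewrite mxE. Qed.

Lemma quad_bound_col (n q : nat) (A : 'M[R]_(n, q)) (mu : R) :
  (forall nu, eigenvalue (A^T *m A) nu -> nu <= mu) ->
  forall v : 'cV[R]_q, sqnorm (A *m v) <= mu * sqnorm v.
Proof.
by move=> H v; rewrite !sqnorm_col trmx_mul; apply: quad_bound_row.
Qed.

Lemma Xw_bound (n m q : nat) (X : 'M[R]_(n, m + q)) (mu : R) :
  (forall nu, eigenvalue ((rsubmx X)^T *m rsubmx X) nu -> nu <= mu) ->
  forall w : 'cV[R]_(m + q), (forall k : 'I_m, w (lshift q k) 0 = 0) ->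
  sqnorm (X *m w) <= mu * sqnorm w.
Proof.
move=> H w w0.
have U0 : usubmx w = 0 by apply/matrixP => i j; rewrite (ord1 j) !mxE w0.
have E : X *m w = rsubmx X *m dsubmx w.
  by rewrite -{1}[X]hsubmxK -{1}[w]vsubmxK mul_row_col U0 mulmx0 add0r.
have Ew : sqnorm w = sqnorm (dsubmx w).
  rewrite /sqnorm big_split_ord /= big1 ?add0r; last by move=> i _; rewrite w0 expr0n.
  by apply: eq_bigr => k _; rewrite mxE.
rewrite E Ew; exact: quad_bound_col.
Qed.

Lemma conv01 (th a b : R) : 0 <= th <= 1 -> 0 <= a <= 1 -> 0 <= b <= 1 ->
  0 <= th * a + (1 - th) * b <= 1.
Proof.
move=> /andP[t0 t1] /andP[a0 a1] /andP[b0 b1].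
have t0' : 0 <= 1 - th by rewrite subr_ge0.
apply/andP; split; first by rewrite addr_ge0 // mulr_ge0.
have : th * a <= th by rewrite ler_piMr.
have : (1 - th) * b <= 1 - th by rewrite ler_piMr.
lra.
Qed.

Lemma ecomb (r c : nat) (A B : 'M[R]_(r, c)) a d i j :
  (a *: A + d *: B) i j = a * A i j + d * B i j.
Proof. by rewrite !mxE. Qed.

Lemma esub (r c : nat) (A B : 'M[R]_(r, c)) i j : (A - B) i j = A i j - B i j.
Proof. by rewrite !mxE. Qed.

Definition Obj (n m q : nat) (X : 'M[R]_(n, m + q)) (y : 'I_n -> R) (del lam : R)
  (t : 'rV[R]_q) (bb : R * 'cV[R]_(m + q)) : R :=
  - (n%:R)^-1 * loglik X y bb.1 (Tmx m t *m bb.2)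
     + lam * sqnorm bb.2 + del * sqnorm (Gmx m t *m bb.2).

Lemma obj_concave (n m q : nat) (X : 'M[R]_(n, m + q)) (y : 'I_n -> R) (del lam : R)
  (t1 t2 : 'rV[R]_q) (th : R) (bb : R * 'cV[R]_(m + q)) :
  (0 < n)%N ->
  (forall w : 'cV[R]_(m + q), (forall k : 'I_m, w (lshift q k) 0 = 0) ->
     sqnorm (X *m w) <= 8 * n%:R * del * sqnorm w) ->
  cube01 t1 -> cube01 t2 -> 0 <= th <= 1 ->
  th * Obj X y del lam t1 bb + (1 - th) * Obj X y del lam t2 bb
  <= Obj X y del lam (th *: t1 + (1 - th) *: t2) bb.
Proof.
move=> n0 HX c1 c2 th01.
set tz := th *: t1 + (1 - th) *: t2.
have cz : cube01 tz.
  move=> j; rewrite !mxE; exact: conv01.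
case: bb => b0 b; rewrite /Obj /= (Gmx_sq b cz) (Gmx_sq b c1) (Gmx_sq b c2).
set u1 := Tmx m t1 *m b; set u2 := Tmx m t2 *m b; set uz := Tmx m tz *m b.
have Uz : uz = th *: u1 + (1 - th) *: u2.
  apply/matrixP => j k; rewrite (ord1 k) {1}/uz Tmx_mulE /tz rr_lin.
  set r1 := rr m t1 0 j; set r2 := rr m t2 0 j.
  by rewrite ecomb /u1 /u2 !Tmx_mulE -/r1 -/r2; ring.
set w := u1 - u2.
have w0 : forall k : 'I_m, w (lshift q k) 0 = 0.
  move=> k; rewrite /w esub /u1 /u2 !Tmx_mulE /rr !row_mxEl !mxE; ring.
have Xz : forall i, (X *m uz) i 0 = th * (X *m u1) i 0 + (1 - th) * (X *m u2) i 0.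
  by move=> i; rewrite Uz mulmxDr -!scalemxAr ecomb.
have Xw : forall i, (X *m w) i 0 = (X *m u1) i 0 - (X *m u2) i 0.
  by move=> i; rewrite /w mulmxBr esub.
rewrite /loglik [in X in _ <= X](sum_comb
   (fun i => y i * (b0 + (X *m u1) i 0) - ln (1 + expR (b0 + (X *m u1) i 0)))
   (fun i => y i * (b0 + (X *m u2) i 0) - ln (1 + expR (b0 + (X *m u2) i 0))) _ th).
rewrite [in X in _ <= X](sum_comb
   (fun j => (1 - rr m t1 0 j ^+ 2) * b j 0 ^+ 2)
   (fun j => (1 - rr m t2 0 j ^+ 2) * b j 0 ^+ 2) _ th).
apply: arith.
rewrite [X in _ <= del * X](_ : _ = th * (1 - th) * sqnorm w); last first.
  rewrite /sqnorm mulr_sumr; apply: eq_bigr => j _.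
  rewrite /w esub /u1 /u2 !Tmx_mulE /tz rr_lin; ring.
have P0 : 0 <= th * (1 - th).
  by case/andP: th01 => h0 h1; rewrite mulr_ge0 // subr_ge0.
have ni0 : 0 < (n%:R : R)^-1 by rewrite invr_gt0 ltr0n.
apply: (@le_trans _ _ ((n%:R)^-1 * (th * (1 - th) / 8 * sqnorm (X *m w)))).
  apply: ler_wpM2l; first exact: ltW.
  rewrite /sqnorm mulr_sumr; apply: ler_sum => i _.
  rewrite Xz Xw.
  set p1 := (X *m u1) i 0; set p2 := (X *m u2) i 0.
  have := @psi_gap R th (b0 + p1) (b0 + p2) th01.
  rewrite (_ : th * (b0 + p1) + (1 - th) * (b0 + p2) = b0 + (th * p1 + (1 - th) * p2));
    last by ring.
  set L1 := ln (1 + expR (b0 + p1)); set L2 := ln (1 + expR (b0 + p2)).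
  set Lz := ln (1 + expR (b0 + (th * p1 + (1 - th) * p2))).
  move=> h; rewrite -subr_ge0.
  set G := (X in 0 <= X).
  have -> : G = th * (1 - th) * (b0 + p1 - (b0 + p2)) ^+ 2 / 8
                - (th * L1 + (1 - th) * L2 - Lz) by rewrite /G; ring.
  by rewrite subr_ge0.
have := HX w w0 => h.
have n0' : (n%:R : R) != 0 by rewrite pnatr_eq0 -lt0n.
set sw := sqnorm w in h *; set sx := sqnorm (X *m w) in h *.
rewrite -subr_ge0.
have -> : del * (th * (1 - th) * sw) - (n%:R)^-1 * (th * (1 - th) / 8 * sx)
   = th * (1 - th) / 8 * (n%:R)^-1 * (8 * n%:R * del * sw - sx).
  by field; exact: n0'.
apply: mulr_ge0; last by rewrite subr_ge0.
apply: mulr_ge0; last exact: ltW.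
by apply: mulr_ge0 => //; rewrite invr_ge0.
Qed.

End Conc.

Section Comb.
Variable R : realType.
Variables q k : nat.
Variable F : 'rV[R]_q -> R.
Hypothesis Fc : concave_on (@Tk R q k) F.

Definition fr (t : 'rV[R]_q) : {set 'I_q} := [set j | (0 < t 0 j) && (t 0 j < 1)].

Lemma nat_sum01 (P : pred 'I_q) (t : 'rV[R]_q) :
  (forall j, P j -> t 0 j = 0 \/ t 0 j = 1) ->
  exists c : nat, \sum_(j | P j) t 0 j = c%:R.
Proof.
move=> H; apply: (big_ind (fun x : R => exists c : nat, x = c%:R)).
- by exists 0%N.
- by move=> x1 x2 [c1 ->] [c2 ->]; exists (c1 + c2)%N; rewrite natrD.
- by move=> j Pj; case: (H j Pj) => ->; [exists 0%N | exists 1%N].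
Qed.

Lemma nonfrac01 (x : R) : 0 <= x <= 1 -> ~~ ((0 < x) && (x < 1)) -> x = 0 \/ x = 1.
Proof.
move=> /andP[x0 x1] H.
have [->|xn0] := eqVneq x 0; first by left.
right; apply/eqP; rewrite eq_le x1 /= leNgt; apply/negP => lt1; move/negP: H; apply.
by rewrite lt_neqAle eq_sym xn0 x0 lt1.
Qed.

Lemma no_int_frac (x : R) (c : nat) : 0 < x < 1 -> x = k%:R - c%:R -> False.
Proof.
move=> /andP[x0 x1] E.
case: (leqP c k) => h.
  rewrite -natrB // in E; move: E; case: (k - c)%N => [|d] E.
    by rewrite E ltxx in x0.
  by move: x1; rewrite E ltNge ler1n.
have : k%:R - c%:R < 0 :> R by rewrite subr_lt0 ltr_nat.
by rewrite -E ltNge (ltW x0).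
Qed.

Lemma second_frac (t : 'rV[R]_q) i : @Tk R q k t -> i \in fr t ->
  exists j, j != i /\ j \in fr t.
Proof.
move=> [t01 ts] ifr.
case: (boolP [exists j, (j != i) && (j \in fr t)]).
  by move=> /existsP [j /andP[ji jfr]]; exists j.
rewrite negb_exists => /forallP H.
have H01 : forall j, j != i -> t 0 j = 0 \/ t 0 j = 1.
  move=> j ji; apply: nonfrac01 => //.
  by move: (H j); rewrite ji /= inE.
have [c Hc] := nat_sum01 H01.
move: ts; rewrite (bigD1 i) //= Hc => E.
exfalso; apply: (@no_int_frac (t 0 i) c).
  by move: ifr; rewrite inE.
by rewrite -E addrK.
Qed.

Definition mv (t : 'rV[R]_q) (i j : 'I_q) (a : R) : 'rV[R]_q :=
  \row_l (t 0 l + a * ((l == i)%:R - (l == j)%:R)).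

Lemma sum_ind (i : 'I_q) : \sum_(l < q) ((l == i)%:R : R) = 1.
Proof.
rewrite (bigD1 i) //= eqxx big1 ?addr0 // => l /negPf ->; done.
Qed.

Lemma mv_sum t i j a : \sum_l mv t i j a 0 l = \sum_l t 0 l.
Proof.
under eq_bigr do rewrite mxE.
rewrite big_split /= -mulr_sumr sumrB !sum_ind subrr mulr0 addr0 //.
Qed.

Lemma mvE t i j a l : i != j ->
  mv t i j a 0 l = if l == i then t 0 i + a else if l == j then t 0 j - a else t 0 l.
Proof.
move=> ij; rewrite mxE.
have [->|li] := eqVneq l i.
  by rewrite (negPf ij) /= ?mulr0n ?mulr1n; ring.
have [->|lj] := eqVneq l j; first by rewrite /= ?mulr0n ?mulr1n; ring.
by rewrite /= ?mulr0n ?mulr1n; ring.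
Qed.

Lemma mv_ok t i j a : @Tk R q k t -> i != j -> i \in fr t -> j \in fr t ->
  0 < a -> t 0 i + a <= 1 -> 0 <= t 0 j - a ->
  (t 0 i + a = 1 \/ t 0 j - a = 0) ->
  @Tk R q k (mv t i j a) /\ (#|fr (mv t i j a)| < #|fr t|)%N.
Proof.
move=> [t01 ts] ij ifr jfr a0 ia ja Hor.
move: (ifr) (jfr); rewrite !inE => /andP[i0 i1] /andP[j0 j1].
split.
  split; last by rewrite mv_sum.
  move=> l; rewrite mvE //.
  case: eqP => [_|_]; first by apply/andP; split => //; lra.
  case: eqP => [_|_]; first by apply/andP; split => //; lra.
  exact: t01.
apply: proper_card; apply/properP; split.
  apply/fintype.subsetP => l; rewrite inE mvE //.
  case: eqP => [->//|_]; case: eqP => [->//|_].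
  by rewrite inE.
case: Hor => E.
  by exists i => //; rewrite inE mvE // eqxx E ltxx andbF.
exists j => //; rewrite inE mvE // eqxx.
by rewrite eq_sym (negPf ij) E ltxx.
Qed.

Lemma pick_a (x y : R) : 0 < x -> 0 < y ->
  exists a, [/\ 0 < a, a <= x, a <= y & (a = x \/ a = y)].
Proof.
move=> x0 y0; case: (leP x y) => h.
  by exists x; split => //; left.
by exists y; split => //; [exact: ltW | right].
Qed.

Lemma reduce N : forall t, @Tk R q k t -> (#|fr t| <= N)%N ->
  exists2 s, @Sk R q k s & F s <= F t.
Proof.
elim: N => [|N IH] t tT.
  rewrite leqn0 cards_eq0 => /eqP fr0.
  exists t => //; split; last by case: tT.
  move=> j; apply: nonfrac01; first by case: tT => h _; exact: h.
  apply/negP => h; have : j \in fr t by rewrite inE h.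
  by rewrite fr0 inE.
move=> hN.
have [fr0|[i ifr]] := set_0Vmem (fr t).
  exists t => //; split; last by case: tT.
  move=> j; apply: nonfrac01; first by case: tT => h _; exact: h.
  apply/negP => h; have : j \in fr t by rewrite inE h.
  by rewrite fr0 inE.
have [j [ji jfr]] := second_frac tT ifr.
have ij : i != j by rewrite eq_sym.
move: (ifr) (jfr); rewrite !inE => /andP[i0 i1] /andP[j0 j1].
have [a [a0 ax ay aor]] := @pick_a (1 - t 0 i) (t 0 j) ltac:(lra) j0.
have [b [b0 bx bby bor]] := @pick_a (1 - t 0 j) (t 0 i) ltac:(lra) i0.
have [T1 C1] := @mv_ok t i j a tT ij ifr jfr a0 ltac:(lra) ltac:(lra)
   ltac:(case: aor => ->; [left | right]; ring).
have [T2 C2] := @mv_ok t j i b tT ji jfr ifr b0 ltac:(lra) ltac:(lra)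
   ltac:(case: bor => ->; [left | right]; ring).
have [s1 S1 F1] := IH _ T1 ltac:(rewrite -ltnS; exact: leq_trans C1 hN).
have [s2 S2 F2] := IH _ T2 ltac:(rewrite -ltnS; exact: leq_trans C2 hN).
set th := b / (a + b).
have ab0 : 0 < a + b by lra.
have th01 : 0 <= th <= 1.
  apply/andP; split; first by rewrite divr_ge0 // ltW.
  by rewrite ler_pdivrMr // mul1r lerDr ltW.
have Et : t = th *: mv t i j a + (1 - th) *: mv t j i b.
  apply/rowP => l; rewrite !mxE /th.
  by field; rewrite gt_eqF.
have Hc := Fc T1 T2 th01.
rewrite -Et in Hc.
case: (leP (F s1) (F s2)) => h12.
  exists s1 => //; apply: le_trans Hc.
  case/andP: th01 => t0 t1.
  have : th * F s1 <= th * F (mv t i j a) by apply: ler_wpM2l.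
  have : (1 - th) * F s1 <= (1 - th) * F (mv t j i b).
    by apply: ler_wpM2l; [rewrite subr_ge0 | exact: le_trans F2].
  lra.
exists s2 => //; apply: le_trans Hc.
case/andP: th01 => t0 t1.
have : th * F s2 <= th * F (mv t i j a).
  by apply: ler_wpM2l => //; apply: le_trans F1; exact: ltW.
have : (1 - th) * F s2 <= (1 - th) * F (mv t j i b).
  by apply: ler_wpM2l; [rewrite subr_ge0 | exact: F2].
lra.
Qed.

Definition rowof (A : {set 'I_q}) : 'rV[R]_q := \row_j ((j \in A)%:R).

Lemma sum_ind_set (A : {set 'I_q}) : \sum_j (((j \in A)%:R) : R) = #|A|%:R.
Proof.
rewrite -sumr_const [RHS]big_mkcond /=; apply: eq_bigr => j _.
by case: (j \in A).
Qed.

Lemma Sk_rowof s : @Sk R q k s ->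
  s = rowof [set j | s 0 j == 1]%SET /\ #|[set j | s 0 j == 1]%SET| = k.
Proof.
move=> [s01 ss].
have E : s = rowof [set j | s 0 j == 1]%SET.
  apply/rowP => j; rewrite !mxE inE.
  case: (s01 j) => ->; last by rewrite eqxx.
  by rewrite eq_sym oner_eq0.
split=> //.
set A := (X in rowof X) in E *.
have : \sum_j (rowof A) 0 j = k%:R by rewrite -E.
rewrite (eq_bigr (fun j => ((j \in A)%:R : R))); last by move=> j _; rewrite mxE.
rewrite sum_ind_set => /eqP; rewrite eqr_nat => /eqP; done.
Qed.

Lemma rowof_Sk (A : {set 'I_q}) : #|A| = k -> @Sk R q k (rowof A).
Proof.
move=> cA; split.
  by move=> j; rewrite mxE; case: (j \in A); [right | left].
under eq_bigr do rewrite mxE.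
by rewrite sum_ind_set cA.
Qed.

Lemma T0 : (k <= q)%N -> @Tk R q k (const_mx (k%:R / q%:R)).
Proof.
move=> kq; case: q kq => [|q'] kq.
  have k0 : k = 0%N by apply/eqP; rewrite -leqn0.
  by split; [case | rewrite big_ord0 k0].
split.
  move=> j; rewrite mxE; apply/andP; split; first by rewrite divr_ge0.
  by rewrite ler_pdivrMr ?ltr0n // mul1r ler_nat.
under eq_bigr do rewrite mxE.
rewrite sumr_const card_ord -mulr_natl.
field; by rewrite (_ : 1 + q'%:R = q'.+1%:R) ?pnatr_eq0 // -add1n natrD.
Qed.

Lemma vertex_min : (k <= q)%N ->
  exists2 s, @Sk R q k s & forall t, @Tk R q k t -> F s <= F t.
Proof.
move=> kq.
have [s0 S0 _] := @reduce #|fr (const_mx (k%:R / q%:R))| _ (T0 kq) (leqnn _).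
have [_ C0] := Sk_rowof S0.
have P0 : (fun A : {set 'I_q} => #|A| == k) [set j | s0 0 j == 1]%SET by apply/eqP.
case: (@arg_minP _ R _ _ (fun A : {set 'I_q} => #|A| == k) (fun A => F (rowof A)) P0).
move=> A /eqP PA Amin.
exists (rowof A); first exact: rowof_Sk.
move=> t Tt.
have [s Ss Fst] := @reduce #|fr t| t Tt (leqnn _).
have [E C] := Sk_rowof Ss.
apply: le_trans Fst; rewrite [in X in _ <= X]E; apply: Amin.
by apply/eqP.
Qed.

End Comb.

Section Final.
Variable R : realType.

Lemma Obj_ge0 (n m q : nat) (X : 'M[R]_(n, m + q)) (y : 'I_n -> R) (del lam : R)
  (t : 'rV[R]_q) (bb : R * 'cV[R]_(m + q)) :
  (forall i, y i = 0 \/ y i = 1) -> 0 <= lam -> 0 <= del ->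
  0 <= Obj X y del lam t bb.
Proof.
move=> hy l0 d0; rewrite /Obj.
have L : loglik X y bb.1 (Tmx m t *m bb.2) <= 0.
  rewrite /loglik; apply: sumr_le0 => i _.
  set e := bb.1 + _.
  have e1 : 0 < 1 + expR e by rewrite addr_gt0 // expR_gt0.
  case: (hy i) => ->.
    rewrite mul0r sub0r oppr_le0; apply: ln_ge0.
    by have := expR_ge0 e; lra.
  rewrite mul1r subr_le0 -ler_expR lnK; first by lra.
  by rewrite posrE.
have S : forall d (v : 'cV[R]_d), 0 <= sqnorm v.
  by move=> d v; rewrite /sqnorm sumr_ge0 // => i _; rewrite sqr_ge0.
apply: addr_ge0; first apply: addr_ge0.
- by rewrite mulNr oppr_ge0; apply: mulr_ge0_le0 => //; rewrite invr_ge0.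
- by apply: mulr_ge0.
- by apply: mulr_ge0.
Qed.

Lemma fE (n m q : nat) (X : 'M[R]_(n, m + q)) (y : 'I_n -> R) (del lam : R)
  (t : 'rV[R]_q) : f_obj X y del lam t = inf (range (Obj X y del lam t)).
Proof. by []. Qed.

End Final.
End LR.
Import LR.

Theorem mainTheorem3 (R : realType) (n m q k : nat)
  (X : 'M[R]_(n, m + q)) (y : 'I_n -> R) (lam del : R) :
  (0 < n)%N ->
  (forall i, y i = 0 \/ y i = 1) ->
  0 <= lam ->
  0 < del ->
  (forall nu : R, eigenvalue ((rsubmx X)^T *m rsubmx X) nu ->
     nu / (8 * n%:R) <= del) ->
  (k <= q)%N ->
  concave_on (@open_cube R q) (f_obj X y del lam)
  /\ concave_on (@Tk R q k) (f_obj X y del lam)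
  /\ exists2 s, @Sk R q k s &
       forall t, @Tk R q k t -> f_obj X y del lam s <= f_obj X y del lam t.
Proof.
move=> n0 hy lam0 del0 Hev kq.
have Hev' : forall nu, eigenvalue ((rsubmx X)^T *m rsubmx X) nu -> nu <= 8 * n%:R * del.
  move=> nu /Hev; rewrite ler_pdivrMr; last by rewrite mulr_gt0 // ltr0n.
  by rewrite mulrC.
have HX := Xw_bound Hev'.
have fc : forall t1 t2 th, cube01 t1 -> cube01 t2 -> 0 <= th <= 1 ->
    th * f_obj X y del lam t1 + (1 - th) * f_obj X y del lam t2
    <= f_obj X y del lam (th *: t1 + (1 - th) *: t2).
  move=> t1 t2 th c1 c2 th01.
  have lb : forall t, has_lbound (range (Obj X y del lam t)).
    move=> t; exists 0 => _ [bb _ <-]; apply: Obj_ge0 => //; exact: ltW.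
  rewrite !fE; apply: lb_le_inf.
    by exists (Obj X y del lam (th *: t1 + (1 - th) *: t2) (0, 0)), (0, 0).
  move=> _ [bb _ <-].
  apply: le_trans (@obj_concave R n m q X y del lam t1 t2 th bb n0 HX c1 c2 th01).
  case/andP: (th01) => t0 t1'.
  apply: lerD; apply: ler_wpM2l.
  - exact: t0.
  - by apply: (ge_inf (lb t1)); exists bb.
  - by rewrite subr_ge0.
  - by apply: (ge_inf (lb t2)); exists bb.
have part2 : concave_on (@Tk R q k) (f_obj X y del lam).
  by move=> x z [hx _] [hz _] th hth; apply: fc.
split.
  move=> x z hx hz th hth; apply: fc => // j.
  - by case/andP: (hx j) => a b; rewrite !ltW.
  - by case/andP: (hz j) => a b; rewrite !ltW.
split => //.
exact: (vertex_min part2 kq).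
Qed.
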